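(* Assume that for each $i\in I_n$, every equilibrium $u\in\mathbb{R}^n_+$ of the system lying in $\pi_i$ satisfies $\alpha_iu<1$. Then the system has a unique equilibrium $x^*\in\operatorname{int}\mathbb{R}^n_+$, and $x^*\le Y$.
   Context: Fix $n\ge 1$ and $I_n=\{1,\dots,n\}$. Consider the Lotka–Volterra system $x_i'=b_ix_i(1-\alpha_ix)$, $i\in I_n$, where $b_i>0$, $\alpha_i=(a_{i1},\dots,a_{in})$ with $a_{ii}>0$ and $a_{ij}\ge 0$, on $\mathbb{R}^n_+$; $\le$ is componentwise. $Y=(a_{11}^{-1},\dots,a_{nn}^{-1})^T$, $\pi_i=\{x\in\mathbb{R}^n_+:x_i=0\}$. *)

(* Defs.v *)
(* the statement is purely order-algebraic, so it is stated
   over an arbitrary real closed field R (which includes the real numbers). *)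
From HB Require Import structures.
From mathcomp Require Import all_boot all_order all_algebra.
Set Implicit Arguments. Unset Strict Implicit. Unset Printing Implicit Defensive.
Import Order.TTheory GRing.Theory Num.Theory.
Local Open Scope ring_scope.

(* Points of R^n are functions 'I_n -> R; the interaction matrix is
   a i j = a_{ij}, so alpha_i = (a i 0, ..., a i (n-1)). *)

Definition alpha_dot (R : ringType) (n : nat) (a : 'I_n -> 'I_n -> R)
  (i : 'I_n) (x : 'I_n -> R) : R := \sum_(j < n) a i j * x j.

Definition nonneg_vec (R : numDomainType) (n : nat) (x : 'I_n -> R) : Prop :=
  forall i, 0 <= x i.

Definition pos_vec (R : numDomainType) (n : nat) (x : 'I_n -> R) : Prop :=
  forall i, 0 < x i.

(* x is an equilibrium in R^n_+ of x_i' = b_i x_i (1 - alpha_i x) *)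
Definition is_equilibrium (R : numDomainType) (n : nat) (b : 'I_n -> R)
  (a : 'I_n -> 'I_n -> R) (x : 'I_n -> R) : Prop :=
  nonneg_vec x /\ forall i, b i * x i * (1 - alpha_dot a i x) = 0.

(* Main.v *)
Require Import Defs.
From HB Require Import structures.
From mathcomp Require Import all_boot all_order all_algebra.
From Stdlib Require Import FunctionalExtensionality.
Import Order.TTheory GRing.Theory Num.Theory.
Local Open Scope ring_scope.

Definition Ma {R : rcfType} {n : nat} (a : 'I_n -> 'I_n -> R) (S : {set 'I_n}) : 'M[R]_n :=
  \matrix_(i, j) if (i \in S) && (j \in S) then a i j else (i == j)%:R.
Definition oneS {R : rcfType} {n : nat} (S : {set 'I_n}) : 'cV[R]_n := \col_i (i \in S)%:R.
Definition ys {R : rcfType} {n : nat} (a : 'I_n -> 'I_n -> R) (S : {set 'I_n}) : 'I_n -> R :=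
  fun i => (\adj (Ma a S) *m oneS S) i 0.

Lemma alpha_ext {R : rcfType} {n : nat} (a : 'I_n -> 'I_n -> R) i (f g : 'I_n -> R) :
  (forall l, f l = g l) -> alpha_dot a i f = alpha_dot a i g.
Proof. by move=> h; apply: eq_bigr => l _; rewrite h. Qed.

Lemma L1 {R : rcfType} {n : nat} (a : 'I_n -> 'I_n -> R) (S : {set 'I_n}) (v : 'cV[R]_n)
  (hv : forall j, j \notin S -> v j 0 = 0) i : i \in S ->
  (Ma a S *m v) i 0 = alpha_dot a i (fun l => v l 0).
Proof.
move=> hi; rewrite mxE /alpha_dot; apply: eq_bigr => l _; rewrite !mxE hi /=.
by case: (boolP (l \in S)) => hl //=; rewrite hv // !mulr0.
Qed.

Lemma L2 {R : rcfType} {n : nat} (a : 'I_n -> 'I_n -> R) (S : {set 'I_n}) (v : 'cV[R]_n) i :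
  i \notin S -> (Ma a S *m v) i 0 = v i 0.
Proof.
move=> hi; rewrite mxE (bigD1 i) //= big1 => [|l hl].
  by rewrite !mxE (negbTE hi) /= eqxx mul1r addr0.
by rewrite !mxE (negbTE hi) /= eq_sym (negbTE hl) mul0r.
Qed.

Lemma Ly {R : rcfType} {n : nat} (a : 'I_n -> 'I_n -> R) (S : {set 'I_n}) :
  Ma a S *m (\adj (Ma a S) *m oneS S) = \det (Ma a S) *: oneS S.
Proof. by rewrite mulmxA mul_mx_adj mul_scalar_mx. Qed.

Lemma Yout {R : rcfType} {n : nat} (a : 'I_n -> 'I_n -> R) (S : {set 'I_n}) j :
  j \notin S -> ys a S j = 0.
Proof.
move=> hj; have := congr1 (fun M : 'cV[R]_n => M j 0) (Ly a S).
by rewrite /ys /= L2 // => ->; rewrite !mxE (negbTE hj) mulr0.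
Qed.

Lemma Yin {R : rcfType} {n : nat} (a : 'I_n -> 'I_n -> R) (S : {set 'I_n}) j :
  j \in S -> alpha_dot a j (ys a S) = \det (Ma a S).
Proof.
move=> hj; have := congr1 (fun M : 'cV[R]_n => M j 0) (Ly a S).
rewrite /ys /= L1 //; last by move=> l hl; exact: Yout.
by move=> ->; rewrite !mxE hj mulr1.
Qed.

Lemma adjkk {R : rcfType} {n : nat} (a : 'I_n -> 'I_n -> R) (S : {set 'I_n}) k :
  k \in S -> \adj (Ma a S) k k = \det (Ma a (S :\ k)).
Proof.
move=> hk; rewrite mxE (expand_det_row _ k) (bigD1 k) //= big1 ?addr0.
  rewrite !mxE !in_setD1 eqxx /= mul1r /cofactor; congr (_ * _); congr (\det _).
  apply/matrixP => i j; rewrite !mxE !in_setD1.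
  have h1 : (lift k i == k) = false by apply/negbTE; rewrite eq_sym neq_lift.
  have h2 : (lift k j == k) = false by apply/negbTE; rewrite eq_sym neq_lift.
  by rewrite h1 h2.
move=> j hj; rewrite !mxE in_setD1 eqxx /=.
by rewrite eq_sym (negbTE hj) mul0r.
Qed.

Lemma alpha_ge {R : rcfType} {n : nat} (a : 'I_n -> 'I_n -> R)
  (haij : forall i j, 0 <= a i j) k (f : 'I_n -> R) :
  (forall l, 0 <= f l) -> a k k * f k <= alpha_dot a k f.
Proof.
move=> hf; rewrite /alpha_dot (bigD1 k) //= lerDl sumr_ge0 // => l _.
exact: mulr_ge0.
Qed.

Lemma key {R : rcfType} {n : nat} (b : 'I_n -> R) (a : 'I_n -> 'I_n -> R)
  (haii : forall i, 0 < a i i)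
  (haij : forall i j, 0 <= a i j)
  (hyp : forall (i : 'I_n) (u : 'I_n -> R),
      is_equilibrium b a u -> u i = 0 -> alpha_dot a i u < 1) (S : {set 'I_n}) :
  0 < \det (Ma a S) /\ forall k, k \in S -> 0 < ys a S k.
Proof.
move: {2}#|S|.+1 (ltnSn #|S|) => m; elim: m S => [//|m IH] S hS.
have hy : forall k, k \in S -> 0 < ys a S k.
  move=> k hk.
  have [hD hpos] : 0 < \det (Ma a (S :\ k)) /\ forall k', k' \in S :\ k -> 0 < ys a (S :\ k) k'.
    by apply: IH; move: hS; rewrite (cardsD1 k S) hk.
  set T := S :\ k in hD hpos.
  set Dk := \det (Ma a T) in hD.
  pose z := fun i => ys a T i / Dk.
  have zout : forall j, j \notin T -> z j = 0 by move=> j hj; rewrite /z Yout // mul0r.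
  have zge : forall j, 0 <= z j.
    move=> j; case: (boolP (j \in T)) => hj; last by rewrite zout.
    by apply/ltW/divr_gt0 => //; apply: hpos.
  have zin : forall j, j \in T -> alpha_dot a j z = 1.
    move=> j hj; rewrite /alpha_dot.
    have -> : \sum_(l < n) a j l * z l = alpha_dot a j (ys a T) / Dk.
      by rewrite /alpha_dot mulr_suml; apply: eq_bigr => l _; rewrite /z mulrA.
    by rewrite Yin // divff // gt_eqF.
  have zeq : is_equilibrium b a z.
    split => // i; case: (boolP (i \in T)) => hi; first by rewrite zin // subrr mulr0.
    by rewrite zout // mulr0 mul0r.
  have zk : z k = 0 by rewrite zout // in_setD1 eqxx.
  have hw := hyp k z zeq zk.
  set w := 1 - alpha_dot a k z.
  have wpos : 0 < w by rewrite subr_gt0.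
  pose zc : 'cV[R]_n := \col_i z i.
  have hM : Ma a S *m zc = oneS S - w *: delta_mx k 0.
    apply/matrixP => i j; rewrite (ord1 j).
    case: (boolP (i \in S)) => hi.
      rewrite L1 //; last first.
        move=> l hl; rewrite mxE zout // in_setD1 (negbTE hl) andbF //.
      rewrite (@alpha_ext _ _ _ _ _ z); last by move=> l; rewrite mxE.
      rewrite !mxE hi eqxx andbT.
      case: (eqVneq i k) => [->|hik].
        by rewrite mulr1 /w opprB addrC subrK.
      by rewrite mulr0 subr0 zin // in_setD1 hik.
    rewrite L2 // !mxE (negbTE hi) zout; last by rewrite in_setD1 (negbTE hi) andbF.
    have -> : (i == k) = false by apply/negbTE; apply: contraNneq hi => ->.
    by rewrite mulr0 subrr.
  have := congr1 (fun M : 'cV[R]_n => (\adj (Ma a S) *m M) k 0) hM.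
  rewrite /= mulmxA mul_adj_mx mul_scalar_mx mxE /zc mxE zk mulr0 mulmxBr -scalemxAr.
  rewrite -colE [in X in _ = X]mxE [X in _ + X]mxE [X in _ - X]mxE [X in _ * X]mxE.
  move/esym/eqP; rewrite addr_eq0 => /eqP; rewrite opprK.
  rewrite /ys => ->; rewrite adjkk //; exact: mulr_gt0.
split=> //.
case: (set_0Vmem S) => [-> | [k hk]].
  have -> : Ma a set0 = 1%:M.
    by apply/matrixP => i j; rewrite !mxE in_set0.
  by rewrite det1 ltr01.
have hf : forall l, 0 <= ys a S l.
  move=> l; case: (boolP (l \in S)) => hl; first exact/ltW/hy.
  by rewrite Yout.
rewrite -(Yin a S k hk); apply: lt_le_trans (alpha_ge a haij k _ hf).
exact: mulr_gt0 (haii k) (hy k hk).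
Qed.

Theorem lemma5p1 (R : rcfType) (n : nat) (hn : (1 <= n)%N)
  (b : 'I_n -> R) (a : 'I_n -> 'I_n -> R)
  (hb : forall i, 0 < b i)
  (haii : forall i, 0 < a i i)
  (haij : forall i j, 0 <= a i j)
  (hyp : forall (i : 'I_n) (u : 'I_n -> R),
      is_equilibrium b a u -> u i = 0 -> alpha_dot a i u < 1) :
  exists xs : 'I_n -> R,
    [/\ is_equilibrium b a xs, pos_vec xs,
        (forall y : 'I_n -> R, is_equilibrium b a y -> pos_vec y -> y = xs)
      & (forall i, xs i <= (a i i)^-1)].
Proof.
have [hD hpos] := key b a haii haij hyp setT.
set D := \det (Ma a setT) in hD.
pose xs := fun i => ys a setT i / D.
have xin : forall j, alpha_dot a j xs = 1.
  move=> j; rewrite /alpha_dot.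
  have -> : \sum_(l < n) a j l * xs l = alpha_dot a j (ys a setT) / D.
    by rewrite /alpha_dot mulr_suml; apply: eq_bigr => l _; rewrite /xs mulrA.
  by rewrite Yin ?in_setT // divff // gt_eqF.
have xpos : pos_vec xs by move=> i; apply: divr_gt0 => //; apply: hpos; rewrite in_setT.
exists xs; split.
- split; first by move=> i; apply: ltW.
  by move=> i; rewrite xin subrr mulr0.
- exact: xpos.
- move=> y [_ hy] ypos.
  have yin : forall i, alpha_dot a i y = 1.
    move=> i; have := hy i; move/eqP; rewrite mulf_eq0 mulf_eq0.
    by rewrite (gt_eqF (hb i)) (gt_eqF (ypos i)) /= subr_eq0 => /eqP ->.
  have hU : Ma a setT \in unitmx by rewrite unitmxE unitfE gt_eqF.
  have h0 : Ma a setT *m (\col_i y i - \col_i xs i) = 0.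
    apply/matrixP => i0 j; rewrite (ord1 j) mulmxBr [in RHS]mxE mxE.
    rewrite L1 ?in_setT //; last by move=> l; rewrite in_setT.
    rewrite mxE L1 ?in_setT //; last by move=> l; rewrite in_setT.
    rewrite (@alpha_ext _ _ _ _ _ y); last by move=> l; rewrite mxE.
    rewrite (@alpha_ext _ _ _ _ (fun l => (\col_i1 xs i1) l 0) xs); last by move=> l; rewrite mxE.
    by rewrite yin xin subrr.
  have := congr1 (mulmx (invmx (Ma a setT))) h0.
  rewrite mulKmx // mulmx0 => /subr0_eq hc.
  apply: functional_extensionality => i.
  by have := congr1 (fun M : 'cV[R]_n => M i 0) hc; rewrite /= !mxE.
- move=> i; rewrite -(mulKf (lt0r_neq0 (haii i)) (xs i)).
  rewrite -[X in _ <= X]mulr1; apply: ler_wpM2l; first by rewrite invr_ge0 ltW.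
  rewrite -(xin i); apply: (alpha_ge a haij i xs) => l; exact: ltW.
Qed.
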